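(* Let $v>0$ and consider the system $$\partial_\xi a=r,\qquad \partial_\xi r=-vr-\frac{sa}{2}+\frac{a|r|}{2},\qquad \partial_\xi s=-vs-ra,$$ and the sets $I_1=\{r>0,\ s=2r\}$, $I_2=\{r>0,\ s=-r\}$, $I_3=\{r<0,\ s=r\}$, $I_4=\{r<0,\ s=-2r\}$ in $\mathbb{R}^3$. Consider the condition (H) $(a,r,s)(-\infty)=(a_0,0,0)$ and $(a,r,s)(+\infty)=(0,0,0)$. (i) There is a unique $a_0\in\mathbb{R}$ for which there exists a solution contained in $I_1$ satisfying (H); moreover $a_0=-4v$. (ii) There is a unique $a_0\in\mathbb{R}$ for which there exists a solution contained in $I_4$ satisfying (H); moreover $a_0=4v$. (iii) There is no solution contained in $I_2$ or in $I_3$ satisfying (H). *)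

(* Defs.v *)
From Stdlib Require Import Reals.
From Coquelicot Require Import Coquelicot.
Open Scope R_scope.

Definition is_solution (v : R) (a r s : R -> R) : Prop :=
  forall xi : R,
    is_derive a xi (r xi) /\
    is_derive r xi (- v * r xi - s xi * a xi / 2 + a xi * Rabs (r xi) / 2) /\
    is_derive s xi (- v * s xi - r xi * a xi).

Definition I1 (a r s : R) : Prop := 0 < r /\ s = 2 * r.
Definition I2 (a r s : R) : Prop := 0 < r /\ s = - r.
Definition I3 (a r s : R) : Prop := r < 0 /\ s = r.
Definition I4 (a r s : R) : Prop := r < 0 /\ s = - 2 * r.

Definition contained_in (I : R -> R -> R -> Prop) (a r s : R -> R) : Prop :=
  forall xi : R, I (a xi) (r xi) (s xi).

Definition cond_H (a0 : R) (a r s : R -> R) : Prop :=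
  is_lim a m_infty (Finite a0) /\ is_lim r m_infty (Finite 0) /\
  is_lim s m_infty (Finite 0) /\
  is_lim a p_infty (Finite 0) /\ is_lim r p_infty (Finite 0) /\
  is_lim s p_infty (Finite 0).

Definition admits_solution (v : R) (I : R -> R -> R -> Prop) (a0 : R) : Prop :=
  exists a r s : R -> R,
    is_solution v a r s /\ contained_in I a r s /\ cond_H a0 a r s.

(* Main.v *)
Require Import Defs.
From Stdlib Require Import Reals Lra.
From Coquelicot Require Import Coquelicot.
Open Scope R_scope.
Lemma F_const (F : R -> R) : (forall x, is_derive F x 0) -> forall x y, F x = F y.
Proof.
  intros H x y. destruct (Rtotal_order x y) as [h|[h|h]].
  - apply (eq_is_derive F); [intros t _; apply H | exact h].
  - now subst.
  - symmetry. apply (eq_is_derive F); [intros t _; apply H | exact h].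
Qed.

Lemma lim_const_eq (F : R -> R) (c : R) x (l : R) :
  (forall y, F y = c) -> is_lim F x l -> c = l.
Proof.
  intros Hc Hl.
  assert (H2 : is_lim F x c).
  { eapply is_lim_ext. intros y. symmetry. apply Hc. apply is_lim_const. }
  apply is_lim_unique in Hl. apply is_lim_unique in H2. rewrite Hl in H2.
  now injection H2.
Qed.

Lemma key (v c a0 : R) (a r : R -> R) :
  (forall x, is_derive a x (r x)) ->
  (forall x, is_derive r x (- (v + 2 * c * a x) * r x)) ->
  is_lim a m_infty a0 -> is_lim r m_infty 0 ->
  is_lim a p_infty 0 -> is_lim r p_infty 0 ->
  v * a0 + c * a0 * a0 = 0.
Proof.
  intros Ha Hr l1 l2 l3 l4.
  set (F := fun x => r x + v * a x + c * a x * a x).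
  assert (HF : forall x, is_derive F x 0).
  { intros x. unfold F.
    assert (E : 0 = - (v + 2 * c * a x) * r x + v * r x + (c * r x * a x + c * a x * r x)) by ring.
    rewrite E.
    apply (is_derive_plus (fun x => r x + v * a x) (fun x => c * a x * a x)).
    apply (is_derive_plus r (fun x => v * a x)). apply Hr.
    apply (is_derive_scal a). apply Ha.
    apply (is_derive_mult (fun x => c * a x) a). apply (is_derive_scal a). apply Ha. apply Ha.
    intros; apply Rmult_comm. }
  pose proof (F_const F HF) as Hc.
  assert (LF : forall x (A : R), is_lim a x A -> is_lim r x 0 -> is_lim F x (v * A + c * A * A)).
  { intros x A hA hr. unfold F.
    replace (v * A + c * A * A) with (0 + v * A + c * A * A) by ring.
    eapply is_lim_plus. eapply is_lim_plus. exact hr. apply is_lim_scal_l. exact hA.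
    reflexivity.
    pose proof (is_lim_mult (fun y => c * a y) a x (c * A) A) as HM.
    simpl in HM. apply HM. apply (is_lim_scal_l a c x A). exact hA. exact hA. easy.
    reflexivity. }
  pose proof (LF _ _ l3 l4) as P. pose proof (LF _ _ l1 l2) as M.
  assert (Z : forall y, F y = 0).
  { intros y. pose proof (lim_const_eq F (F y) p_infty _ (fun z => Hc z y) P). lra. }
  symmetry. exact (lim_const_eq F 0 m_infty _ Z M).
Qed.

Lemma incr (a r : R -> R) : (forall x, is_derive a x (r x)) -> (forall x, 0 < r x) ->
  forall x y, x < y -> a x < a y.
Proof.
  intros Ha Hr x y hxy.
  destruct (MVT_gen a x y r) as [c [_ Hc]].
  - intros; apply Ha.
  - intros z _. apply continuity_pt_filterlim. apply (ex_derive_continuous a z).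
    eexists; apply Ha.
  - pose proof (Hr c). assert (0 < r c * (y - x)) by (apply Rmult_lt_0_compat; lra). lra.
Qed.

Lemma sign_lim (a r : R -> R) (a0 : R) : (forall x, is_derive a x (r x)) -> (forall x, 0 < r x) ->
  is_lim a m_infty a0 -> is_lim a p_infty 0 -> a0 < 0.
Proof.
  intros Ha Hr l1 l2.
  pose proof (incr a r Ha Hr 0 1 Rlt_0_1) as H01.
  assert (h1 : Rbar_le a0 (a 0)).
  { apply (is_lim_le_loc a (fun _ => a 0) m_infty). exists 0. intros y hy.
    left. apply (incr a r Ha Hr). exact hy. exact l1. apply is_lim_const. }
  assert (h2 : Rbar_le (a 1) 0).
  { apply (is_lim_le_loc (fun _ => a 1) a p_infty). exists 1. intros y hy.
    left. apply (incr a r Ha Hr). exact hy. apply is_lim_const. exact l2. }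
  simpl in h1, h2. lra.
Qed.

Lemma lim_comp_cont (h a : R -> R) x (A : R) :
  is_lim a x A -> continuous h A -> is_lim (fun y => h (a y)) x (h A).
Proof.
  intros la ch. unfold is_lim in *. eapply filterlim_comp. exact la. exact ch.
Qed.

Lemma lim_lin_m (v : R) : 0 < v -> is_lim (fun y => v * y) m_infty m_infty.
Proof.
  intros hv. pose proof (is_lim_scal_l (fun y => y) v m_infty m_infty (is_lim_id _)) as H.
  simpl in H. destruct (Rle_dec 0 v); [|lra]. destruct (Rle_lt_or_eq_dec 0 v r); [|lra]. exact H.
Qed.
Lemma lim_lin_p (v : R) : 0 < v -> is_lim (fun y => v * y) p_infty p_infty.
Proof.
  intros hv. pose proof (is_lim_scal_l (fun y => y) v p_infty p_infty (is_lim_id _)) as H.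
  simpl in H. destruct (Rle_dec 0 v); [|lra]. destruct (Rle_lt_or_eq_dec 0 v r); [|lra]. exact H.
Qed.

Lemma limE_m (v : R) : 0 < v -> is_lim (fun y => exp (v * y)) m_infty 0.
Proof.
  intros hv. eapply is_lim_comp. apply is_lim_exp_m. apply lim_lin_m; auto.
  exists 0. intros; discriminate.
Qed.
Lemma limE_p (v : R) : 0 < v -> is_lim (fun y => exp (v * y)) p_infty p_infty.
Proof.
  intros hv. eapply is_lim_comp. apply is_lim_exp_p. apply lim_lin_p; auto.
  exists 0. intros; discriminate.
Qed.

Lemma lim_a_m (v k : R) : 0 < v -> is_lim (fun y => k / (1 + exp (v * y))) m_infty k.
Proof.
  intros hv.
  pose proof (lim_comp_cont (fun t => k / (1 + t)) (fun y => exp (v * y)) m_infty 0 (limE_m v hv)) as H.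
  replace (Finite k) with (Finite (k / (1 + 0))) by (f_equal; field). apply H.
  apply (ex_derive_continuous (fun t => k / (1 + t))). auto_derive. lra.
Qed.

Lemma lim_a_p (v k : R) : 0 < v -> is_lim (fun y => k / (1 + exp (v * y))) p_infty 0.
Proof.
  intros hv.
  assert (H1 : is_lim (fun y => 1 + exp (v * y)) p_infty p_infty).
  { eapply is_lim_plus. apply is_lim_const. apply limE_p; auto. reflexivity. }
  pose proof (is_lim_inv _ _ _ H1) as H2. simpl in H2.
  pose proof (is_lim_scal_l _ k _ _ (H2 ltac:(discriminate))) as H3. simpl in H3.
  rewrite Rmult_0_r in H3. exact H3.
Qed.

Lemma exist1 (v : R) : 0 < v -> admits_solution v I1 (- 4 * v).
Proof.
  intros hv.
  set (h := fun t => - t * (v + t / 4)).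
  set (a := fun x => (-4 * v) / (1 + exp (v * x))).
  set (r := fun x => h (a x)).
  assert (Epos : forall x, 0 < exp (v * x)) by (intros; apply exp_pos).
  assert (rpos : forall x, 0 < r x).
  { intros x. unfold r, h, a. pose proof (Epos x).
    assert (0 < 1 + exp (v * x)) by lra.
    replace (- (-4 * v / (1 + exp (v * x))) * (v + -4 * v / (1 + exp (v * x)) / 4))
      with (4 * v * v * exp (v * x) / ((1 + exp (v * x)) * (1 + exp (v * x)))) by (field; lra).
    apply Rdiv_lt_0_compat. apply Rmult_lt_0_compat; [nra|auto]. nra. }
  assert (Da : forall x, is_derive a x (r x)).
  { intros x. pose proof (Epos x). unfold a, r, h. auto_derive. lra. unfold a. field. lra. }
  assert (Dr : forall x, is_derive r x (- v * r x - r x * a x / 2)).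
  { intros x. unfold r, h, a. pose proof (Epos x). auto_derive. repeat split; lra. field. lra. }
  exists a, r, (fun x => 2 * r x). split; [|split].
  - intros x. split; [|split].
    + apply Da.
    + rewrite Rabs_right by (left; apply rpos).
      replace (- v * r x - 2 * r x * a x / 2 + a x * r x / 2) with (- v * r x - r x * a x / 2) by field.
      apply Dr.
    + replace (- v * (2 * r x) - r x * a x) with (2 * (- v * r x - r x * a x / 2)) by field.
      apply (is_derive_scal r). apply Dr.
  - intros x. split. apply rpos. reflexivity.
  - assert (hc : forall A, continuous h A).
    { intros A. apply (ex_derive_continuous h). unfold h. auto_derive. auto. }
    assert (la1 : is_lim a m_infty (-4 * v)) by (apply lim_a_m; auto).
    assert (la2 : is_lim a p_infty 0) by (apply lim_a_p; auto).
    assert (lr1 : is_lim r m_infty 0).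
    { replace (Finite 0) with (Finite (h (-4 * v))) by (f_equal; unfold h; field).
      apply (lim_comp_cont h a); auto. }
    assert (lr2 : is_lim r p_infty 0).
    { replace (Finite 0) with (Finite (h 0)) by (f_equal; unfold h; field).
      apply (lim_comp_cont h a); auto. }
    assert (ls : forall x, is_lim r x 0 -> is_lim (fun y => 2 * r y) x 0).
    { intros x H. pose proof (is_lim_scal_l r 2 x 0 H) as H'. simpl in H'.
      rewrite Rmult_0_r in H'. exact H'. }
    repeat split; auto.
Qed.

Lemma exist4 (v : R) : 0 < v -> admits_solution v I4 (4 * v).
Proof.
  intros hv.
  set (h := fun t => t * (t / 4 - v)).
  set (a := fun x => (4 * v) / (1 + exp (v * x))).
  set (r := fun x => h (a x)).
  assert (Epos : forall x, 0 < exp (v * x)) by (intros; apply exp_pos).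
  assert (rneg : forall x, r x < 0).
  { intros x. unfold r, h, a. pose proof (Epos x).
    assert (0 < 1 + exp (v * x)) by lra.
    replace ((4 * v / (1 + exp (v * x))) * ((4 * v / (1 + exp (v * x))) / 4 - v))
      with (- (4 * v * v * exp (v * x) / ((1 + exp (v * x)) * (1 + exp (v * x))))) by (field; lra).
    apply Ropp_lt_gt_0_contravar.
    apply Rdiv_lt_0_compat. apply Rmult_lt_0_compat; [nra|auto]. nra. }
  assert (Da : forall x, is_derive a x (r x)).
  { intros x. pose proof (Epos x). unfold a, r, h. auto_derive. lra. unfold a. field. lra. }
  assert (Dr : forall x, is_derive r x (- v * r x + r x * a x / 2)).
  { intros x. unfold r, h, a. pose proof (Epos x). auto_derive. repeat split; lra. field. lra. }
  exists a, r, (fun x => - 2 * r x). split; [|split].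
  - intros x. split; [|split].
    + apply Da.
    + rewrite Rabs_left by (apply rneg).
      replace (- v * r x - - 2 * r x * a x / 2 + a x * - r x / 2) with (- v * r x + r x * a x / 2) by field.
      apply Dr.
    + replace (- v * (- 2 * r x) - r x * a x) with (- 2 * (- v * r x + r x * a x / 2)) by field.
      apply (is_derive_scal r). apply Dr.
  - intros x. split. apply rneg. reflexivity.
  - assert (hc : forall A, continuous h A).
    { intros A. apply (ex_derive_continuous h). unfold h. auto_derive. auto. }
    assert (la1 : is_lim a m_infty (4 * v)) by (apply lim_a_m; auto).
    assert (la2 : is_lim a p_infty 0) by (apply lim_a_p; auto).
    assert (lr1 : is_lim r m_infty 0).
    { replace (Finite 0) with (Finite (h (4 * v))) by (f_equal; unfold h; field).
      apply (lim_comp_cont h a); auto. }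
    assert (lr2 : is_lim r p_infty 0).
    { replace (Finite 0) with (Finite (h 0)) by (f_equal; unfold h; field).
      apply (lim_comp_cont h a); auto. }
    assert (ls : forall x, is_lim r x 0 -> is_lim (fun y => - 2 * r y) x 0).
    { intros x H. pose proof (is_lim_scal_l r (-2) x 0 H) as H'. simpl in H'.
      rewrite Rmult_0_r in H'. exact H'. }
    repeat split; auto.
Qed.

Lemma nec (v c a0 : R) (a r s : R -> R) :
  is_solution v a r s -> cond_H a0 a r s ->
  (forall x, - v * r x - s x * a x / 2 + a x * Rabs (r x) / 2 = - (v + 2 * c * a x) * r x) ->
  v * a0 + c * a0 * a0 = 0.
Proof.
  intros Hs [l1 [l2 [_ [l4 [l5 _]]]]] He.
  apply (key v c a0 a r); auto.
  - intros x; apply Hs.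
  - intros x. rewrite <- He. apply Hs.
Qed.

Lemma sign_pos (a r : R -> R) (a0 : R) : (forall x, is_derive a x (r x)) -> (forall x, r x < 0) ->
  is_lim a m_infty a0 -> is_lim a p_infty 0 -> 0 < a0.
Proof.
  intros Ha Hr l1 l2.
  assert (-a0 < 0).
  { apply (sign_lim (fun x => - a x) (fun x => - r x)).
    - intros x. apply (is_derive_opp a x (r x)). apply Ha.
    - intros x. specialize (Hr x). lra.
    - pose proof (is_lim_opp a m_infty a0 l1) as H. simpl in H. exact H.
    - pose proof (is_lim_opp a p_infty 0 l2) as H. simpl in H. rewrite Ropp_0 in H. exact H. }
  lra.
Qed.

Theorem lemma6 (v : R) (hv : 0 < v) :
  (forall a0 : R, admits_solution v I1 a0 <-> a0 = - 4 * v) /\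
  (forall a0 : R, admits_solution v I4 a0 <-> a0 = 4 * v) /\
  (forall a0 : R, ~ admits_solution v I2 a0 /\ ~ admits_solution v I3 a0).
Proof.
  split; [|split].
  - intros a0. split.
    + intros [a [r [s [Hs [Hc HH]]]]].
      assert (E : v * a0 + / 4 * a0 * a0 = 0).
      { apply (nec v (/4) a0 a r s Hs HH). intros x. destruct (Hc x) as [h1 h2].
        rewrite h2, Rabs_right by lra. field. }
      assert (N : a0 < 0).
      { destruct HH as [l1 [_ [_ [l4 _]]]].
        apply (sign_lim a r a0); auto. intros x; apply Hs. intros x; apply (Hc x). }
      assert (F : a0 * (v + a0 / 4) = 0) by lra.
      destruct (Rmult_integral _ _ F); lra.
    + intros ->. apply exist1; auto.
  - intros a0. split.
    + intros [a [r [s [Hs [Hc HH]]]]].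
      assert (E : v * a0 + - / 4 * a0 * a0 = 0).
      { apply (nec v (- / 4) a0 a r s Hs HH). intros x. destruct (Hc x) as [h1 h2].
        rewrite h2, Rabs_left by lra. field. }
      assert (N : 0 < a0).
      { destruct HH as [l1 [_ [_ [l4 _]]]].
        apply (sign_pos a r a0); auto. intros x; apply Hs. intros x; apply (Hc x). }
      assert (F : a0 * (v - a0 / 4) = 0) by lra.
      destruct (Rmult_integral _ _ F); lra.
    + intros ->. apply exist4; auto.
  - intros a0. split.
    + intros [a [r [s [Hs [Hc HH]]]]].
      assert (E : v * a0 + - / 2 * a0 * a0 = 0).
      { apply (nec v (- / 2) a0 a r s Hs HH). intros x. destruct (Hc x) as [h1 h2].
        rewrite h2, Rabs_right by lra. field. }
      assert (N : a0 < 0).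
      { destruct HH as [l1 [_ [_ [l4 _]]]].
        apply (sign_lim a r a0); auto. intros x; apply Hs. intros x; apply (Hc x). }
      assert (F : a0 * (v - a0 / 2) = 0) by lra.
      destruct (Rmult_integral _ _ F); lra.
    + intros [a [r [s [Hs [Hc HH]]]]].
      assert (E : v * a0 + / 2 * a0 * a0 = 0).
      { apply (nec v (/ 2) a0 a r s Hs HH). intros x. destruct (Hc x) as [h1 h2].
        rewrite h2, Rabs_left by lra. field. }
      assert (N : 0 < a0).
      { destruct HH as [l1 [_ [_ [l4 _]]]].
        apply (sign_pos a r a0); auto. intros x; apply Hs. intros x; apply (Hc x). }
      assert (F : a0 * (v + a0 / 2) = 0) by lra.
      destruct (Rmult_integral _ _ F); lra.
Qed.
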